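(* Let $\mathbb{F}$ be an algebraically closed field with $\mathrm{char}\,\mathbb{F}=2$ and $n\ge1$. Then the algebra $T_n$ of trace ${\rm G}_2$-invariants is generated by $S_n$, and no proper subset of $S_n$ generates $T_n$.
   Context: The split octonion algebra $\mathbf{O}$ is the 8-dimensional $\mathbb{F}$-vector space of formal matrices $a=\begin{pmatrix}\alpha&\mathbf{u}\\ \mathbf{v}&\beta\end{pmatrix}$ with $\alpha,\beta\in\mathbb{F}$, $\mathbf{u},\mathbf{v}\in\mathbb{F}^3$, with multiplication $\begin{pmatrix}\alpha&\mathbf{u}\\ \mathbf{v}&\beta\end{pmatrix}\begin{pmatrix}\alpha'&\mathbf{u}'\\ \mathbf{v}'&\beta'\end{pmatrix}=\begin{pmatrix}\alpha\alpha'+\mathbf{u}\cdot\mathbf{v}'&\alpha\mathbf{u}'+\beta'\mathbf{u}-\mathbf{v}\times\mathbf{v}'\\ \alpha'\mathbf{v}+\beta\mathbf{v}'+\mathbf{u}\times\mathbf{u}'&\beta\beta'+\mathbf{v}\cdot\mathbf{u}'\end{pmatrix}$ (dot product and cross product on $\mathbb{F}^3$). Trace $\mathrm{tr}(a)=\alpha+\beta$, norm $n(a)=\alpha\beta-\mathbf{u}\cdot\mathbf{v}$. ${\rm G}_2=\mathrm{Aut}(\mathbf{O})$. $T_n$ is the subalgebra of the polynomial ring $\mathbb{F}[\mathbf{O}^n]$ generated by the functions $\underline{a}\mapsto n(a_i)$ ($1\le i\le n$) and $\underline{a}\mapsto\mathrm{tr}(w(a_1,\ldots,a_n))$ for all non-empty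 non-associative words $w$ in $n$ letters. $S_n$ is the set consisting of $\underline{a}\mapsto n(a_i)$ ($1\le i\le n$) and $\underline{a}\mapsto\mathrm{tr}((\cdots((a_{i_1}a_{i_2})a_{i_3})\cdots)a_{i_k})$ for all $k\ge 1$ and $1\le i_1<\cdots<i_k\le n$. *)

(* Defs.v *)
From HB Require Import structures.
From mathcomp Require Import all_boot all_order all_algebra.
From mathcomp Require Import mpoly.
Set Implicit Arguments. Unset Strict Implicit. Unset Printing Implicit Defensive.
Import GRing.Theory.
Local Open Scope ring_scope.

(* Split octonions over a commutative ring R, in Zorn vector-matrix form:
   a = [[alpha, u], [v, beta]] with alpha, beta in R, u, v in R^3. *)
Definition vec3 (R : Type) := (R * R * R)%type.

Section Oct.
Variable R : comRingType.

Definition dot3 (x y : vec3 R) : R :=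
  let: (x1, x2, x3) := x in let: (y1, y2, y3) := y in x1 * y1 + x2 * y2 + x3 * y3.
Definition cross3 (x y : vec3 R) : vec3 R :=
  let: (x1, x2, x3) := x in let: (y1, y2, y3) := y in
  (x2 * y3 - x3 * y2, x3 * y1 - x1 * y3, x1 * y2 - x2 * y1).
Definition add3 (x y : vec3 R) : vec3 R :=
  let: (x1, x2, x3) := x in let: (y1, y2, y3) := y in (x1 + y1, x2 + y2, x3 + y3).
Definition opp3 (x : vec3 R) : vec3 R :=
  let: (x1, x2, x3) := x in (- x1, - x2, - x3).
Definition scale3 (c : R) (x : vec3 R) : vec3 R :=
  let: (x1, x2, x3) := x in (c * x1, c * x2, c * x3).

Record oct := Oct { oalpha : R; ou : vec3 R; ov : vec3 R; obeta : R }.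

Definition omul (a b : oct) : oct :=
  Oct (oalpha a * oalpha b + dot3 (ou a) (ov b))
      (add3 (add3 (scale3 (oalpha a) (ou b)) (scale3 (obeta b) (ou a)))
            (opp3 (cross3 (ov a) (ov b))))
      (add3 (add3 (scale3 (oalpha b) (ov a)) (scale3 (obeta a) (ov b)))
            (cross3 (ou a) (ou b)))
      (obeta a * obeta b + dot3 (ov a) (ou b)).

Definition otr (a : oct) : R := oalpha a + obeta a.
Definition onorm (a : oct) : R := oalpha a * obeta a - dot3 (ou a) (ov a).
End Oct.

Inductive word (n : nat) : Type :=
| WLetter of 'I_n
| WMul of word n & word n.

Fixpoint eval_word (R : comRingType) (n : nat) (a : 'I_n -> oct R) (w : word n)
  : oct R :=
  match w with
  | WLetter i => a i
  | WMul w1 w2 => omul (eval_word a w1) (eval_word a w2)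
  end.

(* The polynomial ring F[O^n]: coordinate functions of a_1..a_n, i.e.
   8n variables; variable (i,k) is the k-th coordinate of a_i, with
   coordinates ordered alpha, u1, u2, u3, v1, v2, v3, beta. *)
Section Generic.
Variables (F : fieldType) (n : nat).

Definition coordX (i : 'I_n) (k : nat) : {mpoly F[n * 8]} :=
  'X_(mxvec_index i (inord k : 'I_8)).

Definition generic_oct (i : 'I_n) : oct {mpoly F[n * 8]} :=
  Oct (coordX i 0) (coordX i 1, coordX i 2, coordX i 3)
      (coordX i 4, coordX i 5, coordX i 6) (coordX i 7).

Inductive gen_alg (G : {mpoly F[n * 8]} -> Prop) : {mpoly F[n * 8]} -> Prop :=
| gen_alg_gen p : G p -> gen_alg G p
| gen_alg_const (c : F) : gen_alg G c%:MP
| gen_alg_add p q : gen_alg G p -> gen_alg G q -> gen_alg G (p + q)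
| gen_alg_mul p q : gen_alg G p -> gen_alg G q -> gen_alg G (p * q).

Definition T_gens (p : {mpoly F[n * 8]}) : Prop :=
  (exists i : 'I_n, p = onorm (generic_oct i)) \/
  (exists w : word n, p = otr (eval_word generic_oct w)).

Definition T_alg := gen_alg T_gens.

Definition left_normed (i1 : 'I_n) (s : seq 'I_n) : oct {mpoly F[n * 8]} :=
  foldl (fun acc j => omul acc (generic_oct j)) (generic_oct i1) s.

Definition S_set (p : {mpoly F[n * 8]}) : Prop :=
  (exists i : 'I_n, p = onorm (generic_oct i)) \/
  (exists (i1 : 'I_n) (s : seq 'I_n),
      sorted (fun i j : 'I_n => (i < j)%N) (i1 :: s) /\
      p = otr (left_normed i1 s)).
End Generic.

(* Main.v *)
Require Import Defs.
From HB Require Import structures.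
From mathcomp Require Import all_boot all_order all_algebra.
From mathcomp Require Import mpoly.
From mathcomp Require Import ring zify.
Set Implicit Arguments. Unset Strict Implicit. Unset Printing Implicit Defensive.
Import GRing.Theory.
Local Open Scope ring_scope.


Section OctAlg.
Variable R : comRingType.
Definition oadd (a b : oct R) : oct R :=
  Oct (oalpha a + oalpha b) (add3 (ou a) (ou b)) (add3 (ov a) (ov b)) (obeta a + obeta b).
Definition oscale (c : R) (a : oct R) : oct R :=
  Oct (c * oalpha a) (scale3 c (ou a)) (scale3 c (ov a)) (c * obeta a).
Definition oone : oct R := Oct 1 (0,0,0) (0,0,0) 1.

Ltac octsolve := repeat match goal with a : oct _ |- _ => destruct a as [? [[? ?] ?] [[? ?] ?] ?] end;
  rewrite /omul /oadd /oscale /oone /otr /onorm /dot3 /cross3 /add3 /scale3 /opp3 /=;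
  try congr Oct; try congr (_,_,_); ring.

Lemma omulDl (x y z : oct R) : omul (oadd x y) z = oadd (omul x z) (omul y z).
Proof. octsolve. Qed.
Lemma omulDr (x y z : oct R) : omul x (oadd y z) = oadd (omul x y) (omul x z).
Proof. octsolve. Qed.
Lemma omulZl c (x z : oct R) : omul (oscale c x) z = oscale c (omul x z).
Proof. octsolve. Qed.
Lemma omulZr c (x z : oct R) : omul x (oscale c z) = oscale c (omul x z).
Proof. octsolve. Qed.
Lemma omul1l (x : oct R) : omul oone x = x.
Proof. octsolve. Qed.
Lemma omul1r (x : oct R) : omul x oone = x.
Proof. octsolve. Qed.
Lemma otrD (x y : oct R) : otr (oadd x y) = otr x + otr y.
Proof. octsolve. Qed.
Lemma otrZ c (x : oct R) : otr (oscale c x) = c * otr x.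
Proof. octsolve. Qed.
Lemma otr1 : otr oone = 1 + 1.
Proof. by []. Qed.

Lemma alt1 (x y z : oct R) : omul x (omul y z) =
  oadd (oadd (omul (omul x y) z) (omul (omul y x) z)) (oscale (-1) (omul y (omul x z))).
Proof. octsolve. Qed.
Lemma alt2 (x y z : oct R) : omul (omul y z) x =
  oadd (oadd (omul y (omul z x)) (oscale (-1) (omul (omul y x) z))) (omul y (omul x z)).
Proof. octsolve. Qed.
Lemma ralt (x y : oct R) : omul (omul x y) y = omul x (omul y y).
Proof. octsolve. Qed.
Lemma ralt2 (x y z : oct R) : omul (omul x y) z = oadd (oscale (-1) (omul (omul x z) y)) (omul x (oadd (omul y z) (omul z y))).
Proof. octsolve. Qed.
Lemma jordan (x y : oct R) : oadd (omul x y) (omul y x) =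
  oadd (oadd (oscale (otr x) y) (oscale (otr y) x)) (oscale (otr (omul x y) - otr x * otr y) oone).
Proof. octsolve. Qed.
Lemma jordan' (x y : oct R) : omul x y =
  oadd (oadd (oadd (oscale (otr x) y) (oscale (otr y) x)) (oscale (otr (omul x y) - otr x * otr y) oone)) (oscale (-1) (omul y x)).
Proof. octsolve. Qed.
Lemma sq (x : oct R) : omul x x = oadd (oscale (otr x) x) (oscale (- onorm x) oone).
Proof. octsolve. Qed.
Lemma trC (x y : oct R) : otr (omul x y) = otr (omul y x).
Proof. octsolve. Qed.
End OctAlg.


Section Part1.
Variables (F : fieldType) (n : nat).
Local Notation R := {mpoly F[n * 8]}.
Local Notation a := (@generic_oct F n).
Local Notation C := (gen_alg (@S_set F n)).

Lemma C1 : C 1.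
Proof. by have := gen_alg_const (@S_set F n) 1; rewrite mpolyC1. Qed.
Lemma Cm1 : C (-1).
Proof. by have := gen_alg_const (@S_set F n) (-1); rewrite mpolyCN mpolyC1. Qed.
Lemma CN c : C c -> C (- c).
Proof. by move=> h; rewrite -mulN1r; apply: gen_alg_mul => //; exact: Cm1. Qed.
Lemma CB c d : C c -> C d -> C (c - d).
Proof. by move=> h1 h2; apply: gen_alg_add => //; apply: CN. Qed.

Definition gtI (i j : 'I_n) := (j < i)%N.

Fixpoint lnpr (L : seq 'I_n) : oct R :=
  match L with [::] => oone _ | k :: L => omul (lnpr L) (a k) end.

Inductive M (b : nat) : oct R -> Prop :=
| Mbas L : sorted gtI L -> all (fun i : 'I_n => (i < b)%N) L -> M b (lnpr L)
| Madd x y : M b x -> M b y -> M b (oadd x y)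
| Mscale c x : C c -> M b x -> M b (oscale c x).

Lemma M_mono b b' x : (b <= b')%N -> M b x -> M b' x.
Proof.
move=> hb; elim=> [L sL aL|x' y _ ? _ ?|c x' hc _ ?]; last 2 first.
- exact: Madd. - exact: Mscale.
apply: Mbas => //; apply/allP => i /(allP aL) h; exact: leq_trans h hb.
Qed.

Lemma gtI_trans : transitive gtI.
Proof. by move=> x y z h1 h2; rewrite /gtI (ltn_trans h2 h1). Qed.

Lemma lnpr_rev L : lnpr L = foldl (fun acc j => omul acc (a j)) (oone _) (rev L).
Proof. by elim: L => //= k L IH; rewrite rev_cons foldl_rcons IH. Qed.

Lemma C_tr_bas L : sorted gtI L -> C (otr (lnpr L)).
Proof.
case: L => [|k L] sL.
  by rewrite otr1; apply: gen_alg_add; exact: C1.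
apply: gen_alg_gen; right.
have : rev (k :: L) != [::] by rewrite rev_cons; case: (rev L).
case E: (rev (k :: L)) => [//|i1 s] _.
exists i1, s; split.
  by rewrite -E rev_sorted.
by rewrite lnpr_rev E /= omul1l.
Qed.

Lemma M_tr b x : M b x -> C (otr x).
Proof.
elim=> [L sL _|x' y _ h1 _ h2|c x' hc _ h]; first exact: C_tr_bas.
- by rewrite otrD; apply: gen_alg_add.
- by rewrite otrZ; apply: gen_alg_mul.
Qed.

Lemma C_tra (j : 'I_n) : C (otr (a j)).
Proof. by apply: gen_alg_gen; right; exists j, [::]. Qed.
Lemma C_norm (j : 'I_n) : C (onorm (a j)).
Proof. by apply: gen_alg_gen; left; exists j. Qed.
Lemma C_tr2 (j k : 'I_n) : (j < k)%N -> C (otr (omul (a j) (a k))).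
Proof. by move=> h; apply: gen_alg_gen; right; exists j, [:: k]; rewrite /= andbT. Qed.

Lemma M_a b (j : 'I_n) : (j < b)%N -> M b (a j).
Proof. by move=> h; rewrite -(omul1l (a j)); apply: (Mbas (L := [:: j])); rewrite /= ?h. Qed.

Lemma lemA (k : 'I_n) y : M k y -> M k.+1 (omul y (a k)).
Proof.
elim=> [L sL aL|x' y' _ h1 _ h2|c x' hc _ h].
- apply: (Mbas (L := k :: L)).
    rewrite /= (path_sortedE gtI_trans) sL andbT; exact: aL.
  rewrite /= ltnSn /=; apply/allP => i /(allP aL) h; exact: ltnW.
- by rewrite omulDl; apply: Madd.
- by rewrite omulZl; apply: Mscale.
Qed.

Lemma key L : sorted gtI L -> forall b, all (fun i : 'I_n => (i < b)%N) L ->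
  forall j : 'I_n, (j < b)%N -> M b (omul (lnpr L) (a j)).
Proof.
elim: L => [|k L IH] sL b aL j jb.
  by rewrite /= -/(lnpr [:: j]); apply: Mbas; rewrite /= ?jb.
move: sL; rewrite /= (path_sortedE gtI_trans) => /andP [aLk sL].
move: aL => /= /andP [kb aL].
have aLk' : all (fun i : 'I_n => (i < k)%N) L by [].
have Mm' : M b (lnpr L).
  apply: Mbas => //; apply/allP => i /(allP aLk') h; exact: ltn_trans h kb.
have Mm : M b (lnpr (k :: L)).
  by apply: Mbas; rewrite /= ?kb ?aL // (path_sortedE gtI_trans) aLk sL.
case: (ltngtP j k) => hjk.
-
  rewrite ralt2 jordan omulDr omulDr !omulZr omul1r.
  have h1 : M k (omul (lnpr L) (a j)) by apply: IH.
  apply: Madd; first apply: Mscale; first exact: Cm1.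
    by apply: (M_mono kb); apply: lemA.
  apply: Madd; first apply: Madd.
  + by apply: Mscale; [exact: C_tra | exact: (M_mono (ltnW kb))].
  + by apply: Mscale; [exact: C_tra | exact: Mm].
  + apply: Mscale => //; apply: CB; last by apply: gen_alg_mul; exact: C_tra.
    by rewrite trC; apply: C_tr2.
-
  rewrite -/(lnpr (j :: k :: L)); apply: Mbas.
    rewrite /= (path_sortedE gtI_trans) /=; apply/and3P; split.
    - exact: hjk.
    - exact: aLk.
    - exact: sL.
  by rewrite /= jb kb aL.
-
  have -> : j = k by apply: val_inj.
  rewrite ralt sq omulDr !omulZr omul1r.
  apply: Madd; apply: Mscale => //; [exact: C_tra | apply: CN; exact: C_norm].
Qed.

Lemma RM x (j : 'I_n) : M n x -> M n (omul x (a j)).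
Proof.
elim=> [L sL aL|x' y' _ h1 _ h2|c x' hc _ h].
- exact: key.
- by rewrite omulDl; apply: Madd.
- by rewrite omulZl; apply: Mscale.
Qed.

Lemma LM x (j : 'I_n) : M n x -> M n (omul (a j) x).
Proof.
move=> hx; rewrite jordan'.
apply: Madd; last by apply: Mscale; [exact: Cm1 | exact: RM].
apply: Madd; first apply: Madd.
- by apply: Mscale; [exact: C_tra | done].
- by apply: Mscale; [exact: (M_tr hx) | exact: M_a].
- apply: Mscale; last by apply: (Mbas (L := [::])).
  apply: CB; last by apply: gen_alg_mul; [exact: C_tra | exact: (M_tr hx)].
  rewrite trC; apply: (M_tr (RM j hx)).
Qed.

Definition Good (y : oct R) :=
  (forall x, M n x -> M n (omul x y)) /\ (forall x, M n x -> M n (omul y x)).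

Lemma Good_mul y z : Good y -> Good z -> Good (omul y z).
Proof.
move=> [yr yl] [zr zl]; split => x hx.
- rewrite alt1; apply: Madd; first apply: Madd.
  + by apply: zr; apply: yr.
  + by apply: zr; apply: yl.
  + by apply: Mscale; [exact: Cm1 | apply: yl; apply: zr].
- rewrite alt2; apply: Madd; first apply: Madd.
  + by apply: yl; apply: zl.
  + by apply: Mscale; [exact: Cm1 | apply: zr; apply: yl].
  + by apply: yl; apply: zr.
Qed.

Lemma Good_word (w : word n) : Good (eval_word a w).
Proof.
elim: w => [j|w1 h1 w2 h2] /=; last exact: Good_mul.
by split => x hx; [apply: RM | apply: LM].
Qed.

Lemma C_word (w : word n) : C (otr (eval_word a w)).
Proof.
apply: (@M_tr n); rewrite -(omul1l (eval_word a w)).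
by apply: (Good_word w).1; apply: (Mbas (L := [::])).
Qed.

Lemma ln_word (s : seq 'I_n) (w : word n) :
  foldl (fun acc j => omul acc (a j)) (eval_word a w) s =
  eval_word a (foldl (fun w j => WMul w (WLetter j)) w s).
Proof. by elim: s w => //= j s IH w; rewrite -IH. Qed.

Lemma S_T (p : R) : S_set p -> T_alg p.
Proof.
case=> [[i ->]|[i1 [s [_ ->]]]]; apply: gen_alg_gen; first by left; exists i.
right; exists (foldl (fun w j => WMul w (WLetter j)) (WLetter i1) s).
by rewrite /left_normed -ln_word.
Qed.

Lemma part1 (p : R) : T_alg p <-> C p.
Proof.
split.
- elim=> [q [[i ->]|[w ->]]|c|q r _ h1 _ h2|q r _ h1 _ h2].
  + exact: C_norm.
  + exact: C_word.
  + exact: gen_alg_const.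
  + exact: gen_alg_add.
  + exact: gen_alg_mul.
- elim=> [q hq|c|q r _ h1 _ h2|q r _ h1 _ h2].
  + exact: S_T.
  + exact: gen_alg_const.
  + exact: gen_alg_add.
  + exact: gen_alg_mul.
Qed.
End Part1.


Definition map3 (A B : Type) (f : A -> B) (x : vec3 A) : vec3 B :=
  let: (x1, x2, x3) := x in (f x1, f x2, f x3).
Definition map_oct (A B : comRingType) (f : A -> B) (o : oct A) : oct B :=
  Oct (f (oalpha o)) (map3 f (ou o)) (map3 f (ov o)) (f (obeta o)).

Section MapOct.
Variables (A B : comRingType) (f : {rmorphism A -> B}).
Lemma map_omul (x y : oct A) : map_oct f (omul x y) = omul (map_oct f x) (map_oct f y).
Proof.
case: x => a1 [[u1 u2] u3] [[v1 v2] v3] b1; case: y => a2 [[u1' u2'] u3'] [[v1' v2'] v3'] b2.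
by rewrite /omul /map_oct /= /dot3 /cross3 /add3 /scale3 /opp3 /=
  !(rmorphD, rmorphM, rmorphB, rmorphN).
Qed.
Lemma map_otr (x : oct A) : f (otr x) = otr (map_oct f x).
Proof. by case: x => a1 u v b1; rewrite /otr /map_oct /= rmorphD. Qed.
Lemma map_onorm (x : oct A) : f (onorm x) = onorm (map_oct f x).
Proof.
case: x => a1 [[u1 u2] u3] [[v1 v2] v3] b1.
by rewrite /onorm /map_oct /map3 /= /dot3 rmorphB !rmorphD !rmorphM.
Qed.
End MapOct.

Section Psi.
Variables (F : fieldType) (n : nat).
Local Notation T := {mpoly F[n.+1]}.

Definition ocoord (o : oct T) (k : nat) : T :=
  nth 0 [:: oalpha o; (ou o).1.1; (ou o).1.2; (ou o).2; (ov o).1.1; (ov o).1.2; (ov o).2; obeta o] k.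

Definition hmap (val : 'I_n -> oct T) : 'I_(n * 8) -> T :=
  fun idx => mxvec (\matrix_(i < n, k < 8) ocoord (val i) k) 0 idx.

Local Notation psi val := (mmap (@mpolyC n.+1 F) (hmap val)).

Lemma psi_X val (i : 'I_n) k : (k < 8)%N -> psi val (coordX F i k) = ocoord (val i) k.
Proof.
move=> hk; rewrite /coordX mmapX mmap1U /hmap mxvecE mxE inordK //.
Qed.

Lemma psi_generic val (i : 'I_n) : map_oct (psi val) (generic_oct F i) = val i.
Proof.
rewrite /map_oct /generic_oct /= !psi_X //.
by case: (val i) => a1 [[u1 u2] u3] [[v1 v2] v3] b1.
Qed.

Lemma psi_norm val (i : 'I_n) : psi val (onorm (generic_oct F i)) = onorm (val i).
Proof. by rewrite map_onorm psi_generic. Qed.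

Lemma psi_foldl val (x : oct {mpoly F[n * 8]}) (s : seq 'I_n) :
  map_oct (psi val) (foldl (fun acc j => omul acc (generic_oct F j)) x s) =
  foldl (fun acc j => omul acc (val j)) (map_oct (psi val) x) s.
Proof. by elim: s x => //= j s IH x; rewrite IH map_omul psi_generic. Qed.

Lemma psi_tr val (i1 : 'I_n) s :
  psi val (otr (left_normed F i1 s)) = otr (foldl (fun acc j => omul acc (val j)) (val i1) s).
Proof. by rewrite map_otr /left_normed psi_foldl psi_generic. Qed.

Definition Qp val (Good : 'X_{1..n.+1} -> Prop) (f : {mpoly F[n * 8]}) :=
  forall m, m \in msupp (psi val f) -> Good m.

Lemma Q_closed val (Good : 'X_{1..n.+1} -> Prop) :
  Good 0%MM -> (forall m1 m2, Good m1 -> Good m2 -> Good (m1 + m2)%MM) ->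
  forall G, (forall q, G q -> Qp val Good q) -> forall q, gen_alg G q -> Qp val Good q.
Proof.
move=> G0 GD G hG q; elim=> [p hp|c|p r _ h1 _ h2|p r _ h1 _ h2].
- exact: hG.
- move=> m; rewrite mmapC msuppC; case: (c == 0) => //.
  by rewrite inE => /eqP ->.
- move=> m; rewrite rmorphD => /msuppD_le; rewrite mem_cat => /orP [] ?.
  + exact: h1. + exact: h2.
- move=> m; rewrite rmorphM => /msuppM_le /allpairsP [[m1 m2] /= [hm1 hm2 ->]].
  by apply: GD; [apply: h1 | apply: h2].
Qed.
End Psi.


Section OctZ.
Variable R : comRingType.
Definition ozero : oct R := Oct 0 (0,0,0) (0,0,0) 0.
Ltac octsolve := repeat match goal with a : oct _ |- _ => destruct a as [? [[? ?] ?] [[? ?] ?] ?] end;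
  rewrite /omul /oadd /oscale /oone /ozero /otr /onorm /dot3 /cross3 /add3 /scale3 /opp3 /=;
  try congr Oct; try congr (_,_,_); ring.
Lemma omul0l (x : oct R) : omul ozero x = ozero. Proof. octsolve. Qed.
Lemma omul0r (x : oct R) : omul x ozero = ozero. Proof. octsolve. Qed.
Lemma oscale1 (x : oct R) : oscale 1 x = x. Proof. octsolve. Qed.
Lemma oscaleA a b (x : oct R) : oscale a (oscale b x) = oscale (a * b) x. Proof. octsolve. Qed.
Lemma omulZ1 c (x : oct R) : omul x (oscale c (oone _)) = oscale c x. Proof. octsolve. Qed.
Lemma otr0 : otr ozero = 0. Proof. by rewrite /otr /= addr0. Qed.
Lemma onorm0 : onorm ozero = 0. Proof. rewrite /onorm /dot3 /=; ring. Qed.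

End OctZ.

Section Fold.
Variables (R : comRingType) (n : nat) (val : 'I_n -> oct R).
Local Notation f := (fun acc j => omul acc (val j)).
Lemma fz s : foldl f (ozero R) s = ozero R.
Proof. by elim: s => //= j s IH; rewrite omul0l. Qed.
Lemma fz2 y s : (exists2 j, j \in s & val j = ozero R) -> foldl f y s = ozero R.
Proof.
elim: s y => [|j s IH] y [x] //; rewrite inE => /orP [/eqP -> h|hx h] /=.
  by rewrite h omul0r fz.
by apply: IH; exists x.
Qed.
End Fold.

Definition ltI (n : nat) (i j : 'I_n) := (i < j)%N.
Lemma ltI_trans n : transitive (@ltI n).
Proof. by move=> x y z h1 h2; rewrite /ltI (ltn_trans h1 h2). Qed.
Lemma ltI_irr n : irreflexive (@ltI n).
Proof. by move=> x; rewrite /ltI ltnn. Qed.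

Section Cases.
Variables (F : fieldType) (n : nat).
Hypothesis h2 : (1 + 1 : F) = 0.
Local Notation T := {mpoly F[n.+1]}.
Local Notation psi val := (mmap (@mpolyC n.+1 F) (hmap val)).
Local Notation f val := (fun acc j => omul acc (val j)).

Definition sv : T := 'X_(ord_max).
Definition wd (j : 'I_n) : 'I_n.+1 := widen_ord (leqnSn n) j.
Definition tv (j : 'I_n) : T := 'X_(wd j).

Lemma two0 : (1 + 1 : T) = 0.
Proof. by rewrite -mpolyC1 -mpolyCD h2 mpolyC0. Qed.

Lemma msupp_zero : msupp (0 : T) = [::].
Proof. by apply/eqP; rewrite msupp_eq0. Qed.

Lemma Qzero val Good q : psi val q = 0 -> Qp val Good q.
Proof. by move=> h m; rewrite h msupp_zero. Qed.

Lemma single_zero (val : 'I_n -> oct T) i0 :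
  (forall j, j != i0 -> val j = ozero T) ->
  forall j1 r, sorted (@ltI n) (j1 :: r) -> ~~ ((j1 == i0) && (r == [::])) ->
  foldl (f val) (val j1) r = ozero T.
Proof.
move=> hv j1 r hs hn.
have [e|ne] := eqVneq j1 i0; last by rewrite hv // fz.
move: hn hs; rewrite e eqxx /=; case: r => [//|j2 r] _ /= /andP [h12 _].
have : j2 != i0 by apply/eqP => e2; move: h12; rewrite /ltI e2 ltnn.
by move=> /hv ->; rewrite omul0r fz.
Qed.

Definition GoodZ (m : 'X_{1..n.+1}) := m = 0%MM.
Lemma GoodZ0 : GoodZ 0%MM. Proof. by []. Qed.
Lemma GoodZD m1 m2 : GoodZ m1 -> GoodZ m2 -> GoodZ (m1 + m2)%MM.
Proof. by rewrite /GoodZ => -> ->; rewrite addm0. Qed.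

Definition Min (Q : {mpoly F[n * 8]} -> Prop) (Good : 'X_{1..n.+1} -> Prop) := True.

Lemma caseN (i0 : 'I_n) : exists val Good,
  [/\ Good 0%MM, (forall m1 m2, Good m1 -> Good m2 -> Good (m1 + m2)%MM),
      (forall q, S_set q -> q <> onorm (generic_oct F i0) -> Qp val Good q) &
      ~ Qp val Good (onorm (generic_oct F i0))].
Proof.
pose val (j : 'I_n) : oct T := if j == i0 then oscale sv (oone _) else ozero T.
have hv : forall j, j != i0 -> val j = ozero T by move=> j /negbTE hj; rewrite /val hj.
exists val, GoodZ; split.
- exact: GoodZ0.
- exact: GoodZD.
- move=> q [[j ->]|[j1 [r [hs ->]]]] hq; apply: Qzero.
    rewrite psi_norm hv ?onorm0 //; apply/eqP => e; apply: hq; by rewrite e.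
  rewrite psi_tr.
  have [/andP [/eqP e /eqP er]|hn] := boolP ((j1 == i0) && (r == [::])).
    rewrite e er /= /val eqxx /otr /=; by rewrite -mulrDr two0 mulr0.
  by rewrite (single_zero hv) // otr0.
- move=> /(_ (U_(ord_max) + U_(ord_max))%MM).
  rewrite psi_norm /val eqxx.
  have -> : onorm (oscale sv (oone T)) = 'X_[U_(ord_max) + U_(ord_max)] :> T.
    by rewrite mpolyXD /onorm /dot3 /= -/sv; ring.
  rewrite msuppX mem_seq1 eqxx => /(_ isT) /(congr1 (fun m : 'X_{1..n.+1} => m ord_max)).
  by rewrite mnmDE mnm1E eqxx mnm0E.
Qed.

Definition oe1 : oct T := Oct 1 (0,0,0) (0,0,0) 0.

Lemma caseK1 (i1 : 'I_n) : exists val Good,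
  [/\ Good 0%MM, (forall m1 m2, Good m1 -> Good m2 -> Good (m1 + m2)%MM),
      (forall q, S_set q -> q <> otr (left_normed F i1 [::]) -> Qp val Good q) &
      ~ Qp val Good (otr (left_normed F i1 [::]))].
Proof.
pose val (j : 'I_n) : oct T := if j == i1 then oscale sv oe1 else ozero T.
have hv : forall j, j != i1 -> val j = ozero T by move=> j /negbTE hj; rewrite /val hj.
exists val, GoodZ; split.
- exact: GoodZ0.
- exact: GoodZD.
- move=> q [[j ->]|[j1 [r [hs ->]]]] hq; apply: Qzero.
    rewrite psi_norm /val; case: (j == i1); last exact: onorm0.
    rewrite /onorm /dot3 /=; ring.
  rewrite psi_tr.
  have [/andP [/eqP e /eqP er]|hn] := boolP ((j1 == i1) && (r == [::])).
    by case: hq; rewrite e er.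
  by rewrite (single_zero hv) // otr0.
- move=> /(_ (U_(ord_max))%MM).
  rewrite psi_tr /= /val eqxx.
  have -> : otr (oscale sv oe1) = 'X_[U_(ord_max)] :> T.
    by rewrite /otr /= -/sv; ring.
  rewrite msuppX mem_seq1 eqxx => /(_ isT) /(congr1 (fun m : 'X_{1..n.+1} => m ord_max)).
  by rewrite mnm1E eqxx mnm0E.
Qed.
End Cases.


Section K2.
Variables (F : fieldType) (n : nat).
Hypothesis h2 : (1 + 1 : F) = 0.
Local Notation T := {mpoly F[n.+1]}.
Local Notation psi val := (mmap (@mpolyC n.+1 F) (hmap val)).
Local Notation f val := (fun acc j => omul acc (val j)).
Variables (i1 i2 : 'I_n) (I' : seq 'I_n).
Hypothesis hs : sorted (@ltI n) (i1 :: i2 :: I').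
Local Notation I := (i1 :: i2 :: I').
Local Notation sv := (@sv F n).
Local Notation tv := (@tv F n).

Definition ou1 : oct T := Oct 0 (1,0,0) (0,0,0) 0.
Definition ov1 : oct T := Oct 0 (0,0,0) (1,0,0) 0.
Definition valK2 (j : 'I_n) : oct T :=
  if j == i1 then oscale sv ou1 else if j == i2 then ov1
  else if j \in I' then oscale (tv j) (oone T) else ozero T.

Lemma h12 : ltI i1 i2.
Proof. by move: hs => /= /andP []. Qed.
Lemma hI' : all (ltI i2) I'.
Proof. by move: hs; rewrite /= (path_sortedE (@ltI_trans n)) => /andP [_ /andP [h _]]. Qed.
Lemma sI' : sorted (@ltI n) I'.
Proof. by move: hs; rewrite /= (path_sortedE (@ltI_trans n)) => /andP [_ /andP [_ h]]. Qed.

Lemma gt_i2 x : x \in I' -> (i2 < x)%N.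
Proof. by move=> h; exact: (allP hI' x h). Qed.

Lemma v_i1 : valK2 i1 = oscale sv ou1.
Proof. by rewrite /valK2 eqxx. Qed.
Lemma v_i2 : valK2 i2 = ov1.
Proof.
have : i2 != i1 by apply/eqP => e; move: h12; rewrite /ltI e ltnn.
by rewrite /valK2 => /negbTE ->; rewrite eqxx.
Qed.
Lemma v_I j : j \in I' -> valK2 j = oscale (tv j) (oone T).
Proof.
move=> hj; have := gt_i2 hj => h.
have ne2 : j != i2 by apply/eqP => e; move: h; rewrite e ltnn.
have ne1 : j != i1 by apply/eqP => e; move: h h12; rewrite e /ltI => a b; move: (ltn_trans a b); rewrite ltnn.
by rewrite /valK2 (negbTE ne1) (negbTE ne2) hj.
Qed.
Lemma v_O j : j \notin I -> valK2 j = ozero T.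
Proof.
rewrite !inE negb_or negb_or => /and3P [ne1 ne2 nI].
by rewrite /valK2 (negbTE ne1) (negbTE ne2) (negbTE nI).
Qed.

Definition tau (L : seq 'I_n) : T := \prod_(j <- L) tv j.

Lemma chain L : all (fun j => j \in I') L -> forall y, foldl (f valK2) y L = oscale (tau L) y.
Proof.
elim: L => [|j L IH] /=; first by move=> _ y; rewrite /tau big_nil oscale1.
move=> /andP [hj hL] y; rewrite IH // v_I // omulZ1 oscaleA; congr oscale; by rewrite /tau big_cons mulrC.
Qed.

Lemma inI' x : x \in I -> (i2 < x)%N -> x \in I'.
Proof.
rewrite !inE => /orP [/eqP e|/orP [/eqP e|//]] h; move: h; rewrite e.
- by move=> h; move: (ltn_trans h h12); rewrite ltnn.
- by rewrite ltnn.
Qed.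

Lemma allI' (b : 'I_n) r : (i2 <= b)%N -> all (@ltI n b) r -> all (fun j => j \in I) r ->
  all (fun j => j \in I') r.
Proof.
move=> hb /allP g1 /allP g2; apply/allP => x hx; apply: inI'; first exact: g2.
exact: leq_ltn_trans hb (g1 x hx).
Qed.

Definition bigU (L : seq 'I_n) : 'X_{1..n.+1} := (\big[+%MM/0%MM]_(j <- L) U_(wd j))%MM.

Lemma Xsum L : sv * tau L = 'X_[(U_(ord_max) + bigU L)%MM].
Proof.
rewrite mpolyXD; congr (_ * _); rewrite /tau /bigU; elim: L => [|j L IH].
  by rewrite !big_nil mpolyX0.
by rewrite !big_cons mpolyXD IH.
Qed.

Lemma wd_eq (j j0 : 'I_n) : (wd j == wd j0) = (j == j0).
Proof. by rewrite -val_eqE /= val_eqE. Qed.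
Lemma wd_max (j : 'I_n) : (wd j == ord_max) = false.
Proof. by apply/negbTE; rewrite -val_eqE /= neq_ltn ltn_ord. Qed.

Lemma m_max L : (U_(ord_max) + bigU L)%MM ord_max = 1%N.
Proof.
rewrite mnmDE mnm1E eqxx /bigU mnm_sumE big1_seq // => j _.
by rewrite mnm1E wd_max.
Qed.

Lemma m_wd L j0 : (U_(ord_max) + bigU L)%MM (wd j0) = count_mem j0 L.
Proof.
rewrite mnmDE mnm1E eq_sym wd_max add0n /bigU mnm_sumE.
elim: L => [|j L IH]; first by rewrite big_nil.
by rewrite big_cons IH mnm1E wd_eq /= eq_sym.
Qed.

Definition GoodK (m : 'X_{1..n.+1}) :=
  (m ord_max = 0%N /\ forall j, ~~ odd (m (wd j))) \/ (1 < m ord_max)%N \/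
  (m ord_max = 1%N /\ exists j, j \in I' /\ ~~ odd (m (wd j))).

Lemma GoodK0 : GoodK 0%MM.
Proof. by left; split => [|j]; rewrite mnm0E. Qed.

Lemma GoodKD m1 m2 : GoodK m1 -> GoodK m2 -> GoodK (m1 + m2)%MM.
Proof.
case=> [[a0 ae]|[a2|[a1 [j [jI je]]]]]; case=> [[b0 be]|[b2|[b1 [k [kI ke]]]]].
- left; split; first by rewrite mnmDE a0 b0.
  by move=> j; rewrite mnmDE oddD (negbTE (ae j)) (negbTE (be j)).
- by right; left; rewrite mnmDE; lia.
- right; right; split; first by rewrite mnmDE a0 b1.
  by exists k; split => //; rewrite mnmDE oddD (negbTE (ae k)).
- by right; left; rewrite mnmDE; lia.
- by right; left; rewrite mnmDE; lia.
- by right; left; rewrite mnmDE; lia.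
- right; right; split; first by rewrite mnmDE a1 b0.
  by exists j; split => //; rewrite mnmDE oddD (negbTE (be j)) addbF.
- by right; left; rewrite mnmDE; lia.
- by right; left; rewrite mnmDE; lia.
Qed.

Lemma K2_norm j : Qp valK2 GoodK (onorm (generic_oct F j)).
Proof.
rewrite /Qp psi_norm => m; rewrite /valK2.
case: ifP => _.
  have -> : onorm (oscale sv ou1) = 0 by rewrite /onorm /dot3 /=; ring.
  by rewrite msupp_zero.
case: ifP => _.
  have -> : onorm ov1 = 0 by rewrite /onorm /dot3 /=; ring.
  by rewrite msupp_zero.
case: ifP => hj; last by rewrite onorm0 msupp_zero.
have -> : onorm (oscale (tv j) (oone T)) = 'X_[(U_(wd j) + U_(wd j))%MM] :> T.
  by rewrite mpolyXD /onorm /dot3 /= /tv; ring.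
rewrite msuppX mem_seq1 => /eqP ->; left; split.
  by rewrite mnmDE mnm1E wd_max.
by move=> k; rewrite mnmDE addnn odd_double.
Qed.

Lemma K2_tr j1 r : sorted (@ltI n) (j1 :: r) -> ~~ ((j1 == i1) && (r == i2 :: I')) ->
  Qp valK2 GoodK (otr (left_normed F j1 r)).
Proof.
move=> hsJ hne.
have [aJ sr] : all (ltI j1) r /\ sorted (@ltI n) r.
  by move: hsJ; rewrite /= (path_sortedE (@ltI_trans n)) => /andP [].
case hA: (all (fun j => j \in I) (j1 :: r)); last first.
  move/negbT: hA; rewrite -has_predC => /hasP [x hx hxI].
  apply: Qzero; rewrite psi_tr.
  move: hx; rewrite inE => /orP [/eqP e | hxr].
    by rewrite e /= in hxI; rewrite (v_O hxI) fz otr0.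
  by rewrite (fz2 (val:=valK2)) ?otr0 //; exists x => //; exact: v_O.
move: hA => /= /andP [j1I rI].
have [e1|ne1] := eqVneq j1 i1.
  case: r hsJ hne rI aJ sr => [|x r'] hsJ hne rI aJ sr.
    by apply: Qzero; rewrite psi_tr e1 /= v_i1 /otr /=; ring.
  move: rI aJ sr => /= /andP [xI r'I] /andP [hx aJ'] sr.
  have [ar' sr'] : all (ltI x) r' /\ sorted (@ltI n) r'.
    by move: sr; rewrite /= (path_sortedE (@ltI_trans n)) => /andP [].
  have [e2|ne2] := eqVneq x i2.
    have r'I' : all (fun j => j \in I') r'.
      by apply: (allI' (b := x)); rewrite ?e2 // -e2.
    rewrite /Qp psi_tr e1 e2 /= v_i1 v_i2 chain //.
    have -> : otr (oscale (tau r') (omul (oscale sv ou1) ov1)) = sv * tau r'.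
      by rewrite /otr /omul /dot3 /cross3 /add3 /scale3 /opp3 /=; ring.
    rewrite Xsum msuppX => m; rewrite mem_seq1 => /eqP ->.
    right; right; split; first exact: m_max.
    have [sub|] := boolP (all (fun j => j \in r') I').
      exfalso; move: hne; rewrite e1 e2 eqxx /=.
      suff -> : r' = I' by rewrite eqxx.
      apply: (irr_sorted_eq (@ltI_trans n) (@ltI_irr n) sr' sI') => j.
      apply/idP/idP => h; first exact: (allP r'I' j h).
      exact: (allP sub j h).
    rewrite -has_predC => /hasP [j jI jr]; exists j; split => //.
    by rewrite m_wd (count_memPn jr).
  have xI' : x \in I'.
    move: xI; rewrite !inE (negbTE ne2) /= => /orP [/eqP e|//].
    by move: hx; rewrite e1 e /ltI ltnn.
  have r'I' : all (fun j => j \in I') r'.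
    by apply: (allI' (b := x)) => //; apply: ltnW; apply: gt_i2.
  have hall : all (fun j => j \in I') (x :: r') by rewrite /= xI' r'I'.
  apply: Qzero; rewrite psi_tr e1 (chain hall).
  by rewrite v_i1 /otr /=; ring.
have [e2|ne2] := eqVneq j1 i2.
  have rI' : all (fun j => j \in I') r by apply: (allI' (b := j1)) => //; rewrite e2.
  by apply: Qzero; rewrite psi_tr chain // e2 v_i2 /otr /=; ring.
have j1I' : j1 \in I' by move: j1I; rewrite !inE (negbTE ne1) (negbTE ne2).
have rI' : all (fun j => j \in I') r.
  by apply: (allI' (b := j1)) => //; apply: ltnW; apply: gt_i2.
apply: Qzero; rewrite psi_tr chain // v_I // /otr /=.
rewrite -[X in X = 0](_ : tau r * tv j1 * (1 + 1) = _); last by ring.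
by rewrite (@two0 F n h2) mulr0.
Qed.

Lemma K2_p : ~ Qp valK2 GoodK (otr (left_normed F i1 (i2 :: I'))).
Proof.
rewrite /Qp psi_tr /= v_i1 v_i2 chain; last by apply/allP.
have -> : otr (oscale (tau I') (omul (oscale sv ou1) ov1)) = sv * tau I'.
  by rewrite /otr /omul /dot3 /cross3 /add3 /scale3 /opp3 /=; ring.
rewrite Xsum msuppX => /(_ _ (mem_head _ _)).
case=> [[h _]|[h|[_ [j [jI hj]]]]].
- by rewrite m_max in h.
- by rewrite m_max in h.
- by move: hj; rewrite m_wd (count_uniq_mem _ (sorted_uniq (@ltI_trans n) (@ltI_irr n) sI')) jI.
Qed.
End K2.


Section Final.
Variables (F : fieldType) (n : nat).
Hypothesis h2 : (1 + 1 : F) = 0.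

Lemma caseK2 (i1 i2 : 'I_n) (I' : seq 'I_n) : sorted (@ltI n) (i1 :: i2 :: I') ->
  exists val Good,
  [/\ Good 0%MM, (forall m1 m2, Good m1 -> Good m2 -> Good (m1 + m2)%MM),
      (forall q, S_set q -> q <> otr (left_normed F i1 (i2 :: I')) -> Qp val Good q) &
      ~ Qp val Good (otr (left_normed F i1 (i2 :: I')))].
Proof.
move=> hs; exists (valK2 F i1 i2 I'), (GoodK I'); split.
- exact: GoodK0.
- by move=> m1 m2; apply: (GoodKD hs).
- move=> q [[j ->]|[j1 [r [hsJ ->]]]] hq; first exact: K2_norm.
  apply: K2_tr => //; apply/negP => /andP [/eqP e1 /eqP er].
  by apply: hq; rewrite e1 er.
- exact: K2_p.
Qed.

Lemma minimal (p : {mpoly F[n * 8]}) : S_set p -> exists val Good,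
  [/\ Good 0%MM, (forall m1 m2, Good m1 -> Good m2 -> Good (m1 + m2)%MM),
      (forall q, S_set q -> q <> p -> Qp val Good q) & ~ Qp val Good p].
Proof.
case=> [[i ->]|[i1 [s [hs ->]]]]; first exact: caseN.
case: s hs => [|i2 I'] hs; first exact: caseK1.
exact: caseK2.
Qed.
End Final.

Unset Implicit Arguments. Set Strict Implicit. Set Printing Implicit Defensive.
Theorem theorem5p2 (F : closedFieldType) (hchar : (2 \in [pchar F])%N)
  (n : nat) (hn : (1 <= n)%N) :
  (forall p : {mpoly F[n * 8]}, T_alg p <-> gen_alg (S_set (F := F) (n := n)) p) /\
  (forall S : {mpoly F[n * 8]} -> Prop,
     (forall p, S p -> S_set p) ->
     (exists p, S_set p /\ ~ S p) ->
     ~ (forall p : {mpoly F[n * 8]}, T_alg p <-> gen_alg S p)).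
Proof.
split; first by move=> p; exact: part1.
move=> S hS [p [Sp nSp]] H.
have h2 : (1 + 1 : F) = 0 by have := pcharf0 hchar.
have [val [Good [G0 GD hq np]]] := minimal h2 Sp.
have gp : gen_alg S p by apply/H; exact: S_T.
apply: np; apply: (Q_closed G0 GD (G := S)) => // q Sq.
apply: hq; first exact: hS.
by move=> e; apply: nSp; rewrite -e.
Qed.
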